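(* Let $(L,[-,-,-],\varepsilon)$ be a ternary Leibniz color algebra and $P:L\to L$ an even linear map such that for all $x,y,z\in\mathcal{H}(L)$, $$[P(x),P(y),P(z)]=P\big([P(x),P(y),z]+[P(x),y,P(z)]+[x,P(y),P(z)]-[P(x),P(y),P(z)]\big).$$ Then $L$ is a ternary Leibniz color algebra with the bracket $\{x,y,z\}=[P(x),P(y),z]+[P(x),y,P(z)]+[x,P(y),P(z)]-[P(x),P(y),P(z)]$.
   Context: $G$ is an abelian group, $\mathbb{K}$ a field of characteristic $\neq 2$, $\mathcal{H}(V)$ the homogeneous elements of a $G$-graded space $V$; even maps preserve degree. A skew-symmetric bicharacter $\varepsilon:G\times G\to\mathbb{K}^*$ satisfies $\varepsilon(a,b)\varepsilon(b,a)=1$, $\varepsilon(a,b+c)=\varepsilon(a,b)\varepsilon(a,c)$, $\varepsilon(a+b,c)=\varepsilon(a,c)\varepsilon(b,c)$; $\varepsilon(x,y)$ means $\varepsilon$ of the degrees. A ternary Leibniz color algebra is a $G$-graded space with such $\varepsilon$ and an even trilinear $[-,-,-]$ satisfying $[[x,y,z],t,u]=[x,y,[z,t,u]]+\varepsilon(z,t+u)[x,[y,t,u],z]+\varepsilon(y+z,t+u)[[x,t,u],y,z]$ for all homogeneous $x,y,z,t,u$. *)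

(* Defs.v *)
From HB Require Import structures.
From mathcomp Require Import all_boot all_order all_algebra.
Set Implicit Arguments. Unset Strict Implicit. Unset Printing Implicit Defensive.
Import GRing.Theory.
Local Open Scope ring_scope.

Definition graded (K : fieldType) (G : zmodType) (L : lmodType K)
    (V : G -> {pred L}) : Prop :=
  [/\ (forall g, (0 : L) \in V g),
      (forall g (a : K) (u v : L), u \in V g -> v \in V g -> a *: u + v \in V g),
      (forall x : L, exists (s : seq G) (f : G -> L),
          (forall g, f g \in V g) /\ x = \sum_(g <- s) f g) &
      (forall (s : seq G) (f : G -> L), uniq s -> (forall g, f g \in V g) ->
          \sum_(g <- s) f g = 0 -> forall g, g \in s -> f g = 0)].

Definition skew_bicharacter (K : fieldType) (G : zmodType) (eps : G -> G -> K) : Prop :=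
  [/\ (forall a b, eps a b != 0),
      (forall a b, eps a b * eps b a = 1),
      (forall a b c, eps a (b + c) = eps a b * eps a c) &
      (forall a b c, eps (a + b) c = eps a c * eps b c)].

Definition trilinear (K : fieldType) (L : lmodType K) (br : L -> L -> L -> L) : Prop :=
  [/\ (forall y z (k : K) x1 x2, br (k *: x1 + x2) y z = k *: br x1 y z + br x2 y z),
      (forall x z (k : K) y1 y2, br x (k *: y1 + y2) z = k *: br x y1 z + br x y2 z) &
      (forall x y (k : K) z1 z2, br x y (k *: z1 + z2) = k *: br x y z1 + br x y z2)].

Definition even_trilinear (K : fieldType) (G : zmodType) (L : lmodType K)
    (V : G -> {pred L}) (br : L -> L -> L -> L) : Prop :=
  forall a b c x y z, x \in V a -> y \in V b -> z \in V c -> br x y z \in V (a + b + c).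

Definition even_map (K : fieldType) (G : zmodType) (L : lmodType K)
    (V : G -> {pred L}) (P : L -> L) : Prop :=
  forall a x, x \in V a -> P x \in V a.

Definition linear_map (K : fieldType) (L : lmodType K) (P : L -> L) : Prop :=
  forall (k : K) x y, P (k *: x + y) = k *: P x + P y.

Definition ternary_leibniz_color_algebra (K : fieldType) (G : zmodType)
    (L : lmodType K) (V : G -> {pred L}) (eps : G -> G -> K)
    (br : L -> L -> L -> L) : Prop :=
  [/\ graded V, skew_bicharacter eps, trilinear br, even_trilinear V br &
      forall (a b c d e : G) (x y z t u : L),
        x \in V a -> y \in V b -> z \in V c -> t \in V d -> u \in V e ->
        br (br x y z) t u =
          br x y (br z t u)
          + eps c (d + e) *: br x (br y t u) z
          + eps (b + c) (d + e) *: br (br x t u) y z].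

Definition P_bracket (K : fieldType) (L : lmodType K)
    (br : L -> L -> L -> L) (P : L -> L) (x y z : L) : L :=
  br (P x) (P y) z + br (P x) y (P z) + br x (P y) (P z) - br (P x) (P y) (P z).

(* Main.v *)
Require Import Defs.
From HB Require Import structures.
From mathcomp Require Import all_boot all_order all_algebra.
Import GRing.Theory.
Set Implicit Arguments. Unset Strict Implicit.
Local Open Scope ring_scope.

Definition lin1 (K : fieldType) (L : lmodType K) (f : L -> L) :=
  forall (k : K) x1 x2, f (k *: x1 + x2) = k *: f x1 + f x2.

Lemma lin1_0 (K : fieldType) (L : lmodType K) (f : L -> L) : lin1 f -> f 0 = 0.
Proof. move=> H; have := H 1 0 0; rewrite !scale1r addr0 => E. by apply: (@addrI _ (f 0)); rewrite -E addr0. Qed.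

Lemma lin1_D (K : fieldType) (L : lmodType K) (f : L -> L) a b : lin1 f -> f (a + b) = f a + f b.
Proof. by move=> H; have := H 1 a b; rewrite !scale1r. Qed.

Lemma lin1_N (K : fieldType) (L : lmodType K) (f : L -> L) a : lin1 f -> f (- a) = - f a.
Proof. by move=> H; have := H (-1) a 0; rewrite !scaleN1r !addr0 lin1_0 // addr0. Qed.

Lemma lin1_B (K : fieldType) (L : lmodType K) (f : L -> L) a b : lin1 f -> f (a - b) = f a - f b.
Proof. by move=> H; rewrite lin1_D // lin1_N. Qed.

Lemma lin1_add (K : fieldType) (L : lmodType K) (f g : L -> L) : lin1 f -> lin1 g -> lin1 (fun x => f x + g x).
Proof. by move=> Hf Hg k x1 x2; rewrite Hf Hg scalerDr addrACA. Qed.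

Lemma lin1_sub (K : fieldType) (L : lmodType K) (f g : L -> L) : lin1 f -> lin1 g -> lin1 (fun x => f x - g x).
Proof. by move=> Hf Hg k x1 x2; rewrite Hf Hg scalerBr opprD addrACA. Qed.

Lemma lin1_comp (K : fieldType) (L : lmodType K) (f P : L -> L) : lin1 f -> linear_map P -> lin1 (fun x => f (P x)).
Proof. by move=> Hf HP k x1 x2; rewrite HP Hf. Qed.

Lemma lin1_id (K : fieldType) (L : lmodType K) (P : L -> L) : linear_map P -> lin1 P.
Proof. by []. Qed.

Definition Qp (K : fieldType) (L : lmodType K) (P : L -> L) (i k : nat) (w : L) :=
  if i == k then w else P w.

Definition Sp (K : fieldType) (L : lmodType K) (P : L -> L) (F : L -> L -> L -> L -> L -> L)
   (x y z t u : L) : L :=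
  \sum_(0 <= i < 6) (if i == 5%N then - 2%:R else 1 : K) *:
     F (Qp P i 0 x) (Qp P i 1 y) (Qp P i 2 z) (Qp P i 3 t) (Qp P i 4 u).

Lemma Sp_expand (K : fieldType) (L : lmodType K) (P : L -> L) F x y z t u :
  Sp P F x y z t u =
    F x (P y) (P z) (P t) (P u) + F (P x) y (P z) (P t) (P u) + F (P x) (P y) z (P t) (P u)
    + F (P x) (P y) (P z) t (P u) + F (P x) (P y) (P z) (P t) u
    - (F (P x) (P y) (P z) (P t) (P u) + F (P x) (P y) (P z) (P t) (P u)).
Proof.
rewrite /Sp !big_nat_recr //= big_geq // /Qp /= add0r !scale1r.
by rewrite scaleNr -[2%:R]/(1 + 1 : K) scalerDl scale1r.
Qed.

Lemma Sp_lin (K : fieldType) (L : lmodType K) (P : L -> L) F2 F3 F4 (e1 e2 : K) x y z t u :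
  Sp P (fun x y z t u => F2 x y z t u + e1 *: F3 x y z t u + e2 *: F4 x y z t u) x y z t u =
  Sp P F2 x y z t u + e1 *: Sp P F3 x y z t u + e2 *: Sp P F4 x y z t u.
Proof.
rewrite /Sp !scaler_sumr -!big_split /=; apply: eq_bigr => i _.
by rewrite !scalerDr !scalerA (mulrC _ e1) (mulrC _ e2).
Qed.

Lemma Sp_ext (K : fieldType) (L : lmodType K) (P : L -> L) F G x y z t u :
  (forall i, (i < 6)%N -> F (Qp P i 0 x) (Qp P i 1 y) (Qp P i 2 z) (Qp P i 3 t) (Qp P i 4 u)
                 = G (Qp P i 0 x) (Qp P i 1 y) (Qp P i 2 z) (Qp P i 3 t) (Qp P i 4 u)) ->
  Sp P F x y z t u = Sp P G x y z t u.
Proof.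
move=> H; rewrite /Sp big_nat_cond [RHS]big_nat_cond; apply: eq_bigr => i /andP[/andP[_ Hi] _].
by rewrite H.
Qed.

Lemma tri_lin (K : fieldType) (L : lmodType K) (br : L -> L -> L -> L) :
  trilinear br ->
  [/\ forall y z, lin1 (fun a => br a y z), forall x z, lin1 (fun a => br x a z)
    & forall x y, lin1 (fun a => br x y a)].
Proof. by case=> H1 H2 H3; split=> ? ? ? ? ?; [rewrite H1|rewrite H2|rewrite H3]. Qed.


Lemma trD1 (K : fieldType) (L : lmodType K) (br : L -> L -> L -> L) a b y z :
  trilinear br -> br (a + b) y z = br a y z + br b y z.
Proof. by move=> /tri_lin[H1 H2 H3]; apply: (lin1_D _ _ (H1 _ _)). Qed.

Lemma trB1 (K : fieldType) (L : lmodType K) (br : L -> L -> L -> L) a b y z :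
  trilinear br -> br (a - b) y z = br a y z - br b y z.
Proof. by move=> /tri_lin[H1 H2 H3]; apply: (lin1_B _ _ (H1 _ _)). Qed.

Lemma trD2 (K : fieldType) (L : lmodType K) (br : L -> L -> L -> L) x a b z :
  trilinear br -> br x (a + b) z = br x a z + br x b z.
Proof. by move=> /tri_lin[H1 H2 H3]; apply: (lin1_D _ _ (H2 _ _)). Qed.

Lemma trB2 (K : fieldType) (L : lmodType K) (br : L -> L -> L -> L) x a b z :
  trilinear br -> br x (a - b) z = br x a z - br x b z.
Proof. by move=> /tri_lin[H1 H2 H3]; apply: (lin1_B _ _ (H2 _ _)). Qed.

Lemma trD3 (K : fieldType) (L : lmodType K) (br : L -> L -> L -> L) x y a b :
  trilinear br -> br x y (a + b) = br x y a + br x y b.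
Proof. by move=> /tri_lin[H1 H2 H3]; apply: (lin1_D _ _ (H3 _ _)). Qed.

Lemma trB3 (K : fieldType) (L : lmodType K) (br : L -> L -> L -> L) x y a b :
  trilinear br -> br x y (a - b) = br x y a - br x y b.
Proof. by move=> /tri_lin[H1 H2 H3]; apply: (lin1_B _ _ (H3 _ _)). Qed.

Lemma ac1 (V : zmodType) (A B C D E Z : V) :
  E + D + (C + B + A - Z) - Z = A + B + C + D + E - (Z + Z).
Proof. rewrite opprD !addrA. by rewrite [LHS](ACl (5*4*3*2*1*6*7)). Qed.

Lemma ac2 (V : zmodType) (A B C D E Z : V) :
  E + D + C - Z + B + A - Z = A + B + C + D + E - (Z + Z).
Proof. rewrite opprD !addrA. by rewrite [LHS](ACl (6*5*3*2*1*4*7)). Qed.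
Lemma ac3 (V : zmodType) (A B C D E Z : V) :
  C + (E + D + B - Z) + A - Z = A + B + C + D + E - (Z + Z).
Proof. rewrite opprD !addrA. by rewrite [LHS](ACl (6*4*1*3*2*5*7)). Qed.
Lemma ac4 (V : zmodType) (A B C D E Z : V) :
  C + B + (E + D + A - Z) - Z = A + B + C + D + E - (Z + Z).
Proof. rewrite opprD !addrA. by rewrite [LHS](ACl (5*2*1*4*3*6*7)). Qed.

Lemma claim1 (K : fieldType) (L : lmodType K) (br : L -> L -> L -> L) (P : L -> L) x y z t u :
  trilinear br -> P (P_bracket br P x y z) = br (P x) (P y) (P z) ->
  P_bracket br P (P_bracket br P x y z) t u = Sp P (fun x y z t u => br (br x y z) t u) x y z t u.
Proof.
move=> T HP; rewrite Sp_expand /P_bracket HP.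
rewrite !(trB1 _ _ _ _ T) !(trD1 _ _ _ _ T).
exact: ac1.
Qed.


Lemma claim2 (K : fieldType) (L : lmodType K) (br : L -> L -> L -> L) (P : L -> L) x y z t u :
  trilinear br -> P (P_bracket br P z t u) = br (P z) (P t) (P u) ->
  P_bracket br P x y (P_bracket br P z t u) = Sp P (fun x y z t u => br x y (br z t u)) x y z t u.
Proof.
move=> T HP; rewrite Sp_expand /P_bracket HP.
rewrite !(trB3 _ _ _ _ T) !(trD3 _ _ _ _ T).
exact: ac2.
Qed.
Lemma claim3 (K : fieldType) (L : lmodType K) (br : L -> L -> L -> L) (P : L -> L) x y z t u :
  trilinear br -> P (P_bracket br P y t u) = br (P y) (P t) (P u) ->
  P_bracket br P x (P_bracket br P y t u) z = Sp P (fun x y z t u => br x (br y t u) z) x y z t u.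
Proof.
move=> T HP; rewrite Sp_expand /P_bracket HP.
rewrite !(trB2 _ _ _ _ T) !(trD2 _ _ _ _ T).
exact: ac3.
Qed.
Lemma claim4 (K : fieldType) (L : lmodType K) (br : L -> L -> L -> L) (P : L -> L) x y z t u :
  trilinear br -> P (P_bracket br P x t u) = br (P x) (P t) (P u) ->
  P_bracket br P (P_bracket br P x t u) y z = Sp P (fun x y z t u => br (br x t u) y z) x y z t u.
Proof.
move=> T HP; rewrite Sp_expand /P_bracket HP.
rewrite !(trB1 _ _ _ _ T) !(trD1 _ _ _ _ T).
exact: ac4.
Qed.

Lemma Qp_in (K : fieldType) (G : zmodType) (L : lmodType K) (V : G -> {pred L}) (P : L -> L) i k w g :
  even_map V P -> w \in V g -> Qp P i k w \in V g.
Proof. by move=> HP Hw; rewrite /Qp; case: ifP => // _; apply: HP. Qed.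

Theorem mainTheorem13 (K : fieldType) (G : zmodType) (L : lmodType K)
    (V : G -> {pred L}) (eps : G -> G -> K) (br : L -> L -> L -> L)
    (P : L -> L) :
  (2%:R : K) != 0 ->
  ternary_leibniz_color_algebra V eps br ->
  even_map V P -> linear_map P ->
  (forall (a b c : G) (x y z : L), x \in V a -> y \in V b -> z \in V c ->
     br (P x) (P y) (P z) = P (P_bracket br P x y z)) ->
  ternary_leibniz_color_algebra V eps (P_bracket br P).
Proof.
move=> _ [Hg Hs Ht He HL] HPe HPl HPb.
have [Hg0 HgC _ _] := Hg.
have Vadd g u v : u \in V g -> v \in V g -> u + v \in V g.
  by move=> Hu Hv; rewrite -[u]scale1r; apply: HgC.
have Vopp g u : u \in V g -> - u \in V g.
  by move=> Hu; rewrite -[- u]addr0 -scaleN1r; apply: HgC.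
have Vsub g u v : u \in V g -> v \in V g -> u - v \in V g.
  by move=> Hu Hv; apply: Vadd => //; apply: Vopp.
have [H1 H2 H3] := tri_lin Ht.
split => //.
- split => k a1 a2.
  + have := lin1_sub (lin1_add (lin1_add (lin1_comp (H1 (P _) _) HPl)
       (lin1_comp (H1 _ (P _)) HPl)) (H1 (P _) (P _))) (lin1_comp (H1 (P _) (P _)) HPl).
    by apply.
  + have := lin1_sub (lin1_add (lin1_add (lin1_comp (H2 (P _) _) HPl)
       (H2 (P _) (P _))) (lin1_comp (H2 _ (P _)) HPl)) (lin1_comp (H2 (P _) (P _)) HPl).
    by apply.
  + have := lin1_sub (lin1_add (lin1_add (H3 (P _) (P _))
       (lin1_comp (H3 (P _) _) HPl)) (lin1_comp (H3 _ (P _)) HPl)) (lin1_comp (H3 (P _) (P _)) HPl).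
    by apply.
- move=> a b c x y z Hx Hy Hz; rewrite /P_bracket.
  by apply: (Vsub); [apply: (Vadd); [apply: (Vadd)|]|]; apply: He => //; apply: HPe.
- move=> a b c d e x y z t u Hx Hy Hz Ht' Hu.
  rewrite (@claim1 _ _ br P x y z t u Ht (esym (HPb _ _ _ _ _ _ Hx Hy Hz))).
  rewrite (@claim2 _ _ br P x y z t u Ht (esym (HPb _ _ _ _ _ _ Hz Ht' Hu))).
  rewrite (@claim3 _ _ br P x y z t u Ht (esym (HPb _ _ _ _ _ _ Hy Ht' Hu))).
  rewrite (@claim4 _ _ br P x y z t u Ht (esym (HPb _ _ _ _ _ _ Hx Ht' Hu))).
  rewrite -Sp_lin; apply: Sp_ext => i _ /=.
  by apply: (HL a b c d e); apply: Qp_in.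
Qed.
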